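(* Let $(T,\mathcal{F},\mu)$ be a non-atomic measure space with $0<\mu(T)<+\infty$, $E$ a real Banach space, and $f,g:E\to\mathbb{R}$ two functions, with $f$ lower semicontinuous and $g$ continuous, satisfying $$\sup_E f<+\infty,\quad \inf_E g=-\infty,\quad \sup_E g=+\infty$$ and $$\max\left\{\sup_{x\in E}\frac{|f(x)|}{1+\|x\|^p},\ \sup_{x\in E}\frac{|g(x)|}{1+\|x\|^p}\right\}<+\infty$$ for some $p\geq 1$. Assume that $f$ has at most one global minimum and that no zero of $g$ is a global minimum of $f$. For each $u\in L^p(T,E)$ set $$J(u)=\int_T f(u(t))\,d\mu+\left(\int_T g(u(t))\,d\mu\right)^2.$$ Then the restriction of $J$ to any decomposable subset of $L^p(T,E)$ containing the constant functions has no global minima.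
   Context: $L^p(T,E)$ denotes the space of all (equivalence classes of) strongly $\mu$-measurable functions $u:T\to E$ with $\int_T\|u(t)\|^p\,d\mu<+\infty$, normed by $\|u\|=(\int_T\|u(t)\|^p d\mu)^{1/p}$. A set $D\subseteq L^p(T,E)$ is decomposable if for every $u,v\in D$ and every $A\in\mathcal{F}$ the function $t\mapsto \chi_A(t)u(t)+(1-\chi_A(t))v(t)$ belongs to $D$, where $\chi_A$ is the characteristic function of $A$. *)

(* Defs.v *)
From HB Require Import structures.
From mathcomp Require Import all_boot all_order all_algebra.
From mathcomp Require Import all_classical all_reals all_analysis.
Set Implicit Arguments. Unset Strict Implicit. Unset Printing Implicit Defensive.
Import Order.TTheory GRing.Theory Num.Theory.
Import numFieldNormedType.Exports.
Local Open Scope classical_set_scope.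
Local Open Scope ring_scope.

Section defs.
Context {R : realType} {d : measure_display} {T : measurableType d}.
Variable mu : {measure set T -> \bar R}.

Definition nonatomic : Prop :=
  forall A, measurable A -> (0 < mu A)%E ->
    exists B, [/\ measurable B, B `<=` A, (0 < mu B)%E & (mu B < mu A)%E].

Definition simple_fun {E : normedModType R} (s : T -> E) : Prop :=
  finite_set (range s) /\ forall x : E, measurable (s @^-1` [set x]).

Definition strongly_measurable {E : normedModType R} (u : T -> E) : Prop :=
  exists s : nat -> T -> E, (forall n, simple_fun (s n)) /\
    {ae mu, forall t, s n t @[n --> \oo] --> u t}.

(* (representatives of) elements of L^p(T,E) *)
Definition Lp_fun {E : normedModType R} (p : R) (u : T -> E) : Prop :=
  strongly_measurable u /\ (\int[mu]_t ((`|u t| `^ p)%:E) < +oo)%E.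

Definition decomposable {E : normedModType R} (D : set (T -> E)) : Prop :=
  forall u v, D u -> D v -> forall A, measurable A ->
    D (fun t => (\1_A t : R) *: u t + (1 - (\1_A t : R)) *: v t).

Definition Jfun {E : normedModType R} (f g : E -> R) (u : T -> E) : R :=
  fine (\int[mu]_t ((f (u t))%:E)) + (fine (\int[mu]_t ((g (u t))%:E))) ^+ 2.

End defs.

(* Main.v *)
Require Import Defs.
From HB Require Import structures.
From mathcomp Require Import all_boot all_order all_algebra.
From mathcomp Require Import all_classical all_reals all_analysis.
From mathcomp Require Import measurable_realfun.
From mathcomp Require Import lra.
Import Order.TTheory GRing.Theory Num.Theory.
Import numFieldNormedType.Exports.
Local Open Scope classical_set_scope.
Local Open Scope ring_scope.
Set Implicit Arguments. Unset Strict Implicit. Unset Printing Implicit Defensive.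

Section aux.
Context {R : realType} {d : measure_display} {T : measurableType d}.
Context {E : normedModType R}.

Lemma simple_preimage (s : T -> E) (A : set E) : simple_fun s -> measurable (s @^-1` A).
Proof.
move=> [fin ms].
rewrite (_ : s @^-1` A = \bigcup_(x in range s `&` A) s @^-1` [set x]).
  apply: fin_bigcup_measurable; first exact: finite_setIl.
  by move=> x _; exact: ms.
apply/seteqP; split => t /=.
  by move=> At; exists (s t) => //; split => //; exists t.
by move=> [x [_ Ax] /= ->].
Qed.
Lemma lim_preimage_open (s : nat -> T -> E) (u : T -> E) (N : set T) :
  measurable N -> (forall n, simple_fun (s n)) ->
  (forall t, ~ N t -> s n t @[n --> \oo] --> u t) ->
  forall V, open V -> measurable (~` N `&` u @^-1` V).
Proof.
move=> mN ss cv V oV.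
pose M := \bigcup_k \bigcup_m \bigcap_n
   (s (n + m)%N @^-1` [set x | ball x (k.+1%:R^-1) `<=` V]).
have mM : measurable M.
  apply: bigcupT_measurable => k; apply: bigcupT_measurable => m.
  apply: bigcapT_measurable => n; exact: simple_preimage.
rewrite (_ : _ `&` _ = ~` N `&` M); first by apply: measurableI => //; exact: measurableC.
apply/seteqP; split => t [Nt] /=.
- move=> Vut; split => //.
  have : nbhs (u t) V by apply: open_nbhs_nbhs; split.
  move=> /nbhs_ballP[e /= e0 eV].
  have [k kle] : exists k : nat, k.+1%:R^-1 < e / 2.
    exists (Num.Def.archi_bound (e / 2)^-1).
    rewrite -[X in _ < X](invrK (e / 2)) ltf_pV2 ?posrE ?invr_gt0 ?ltr0n ?divr_gt0//.
    by rewrite (lt_le_trans (archi_boundP _)) ?ler_nat// invr_ge0 divr_ge0// ltW.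
  have := cv t Nt; move=> /cvgrPdist_lt /(_ (k.+1%:R^-1)).
  rewrite invr_gt0 ltr0n => /(_ erefl) [m _ Hm].
  exists k => //; exists m => // n _ /= y.
  rewrite -ball_normE /= => hy; apply: eV.
  rewrite -ball_normE /=.
  have h1 := Hm (n + m)%N (leq_addl _ _).
  rewrite /= in h1.
  apply: (le_lt_trans (ler_distD (s (n + m)%N t) _ _)).
  apply: (lt_le_trans (ltrD h1 hy)).
  by rewrite [leRHS](splitr e) ltW// ltrD.
- move=> [k _ [m _ Hm]]; split => //.
  have := cv t Nt; move=> /cvgrPdist_lt /(_ (k.+1%:R^-1)).
  rewrite invr_gt0 ltr0n => /(_ erefl) [m' _ Hm'].
  have H0 := Hm m' I; rewrite /= in H0; apply: H0.
  rewrite -ball_normE /= distrC; exact: Hm' (leq_addr _ _).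
Qed.

Lemma step_in (A : set T) (x y : E) t : A t ->
  (\1_A t : R) *: x + (1 - \1_A t) *: y = x.
Proof. by move=> At; rewrite indicE mem_set// subrr scale0r addr0 scale1r. Qed.

Lemma step_out (A : set T) (x y : E) t : ~ A t ->
  (\1_A t : R) *: x + (1 - \1_A t) *: y = y.
Proof. by move=> At; rewrite indicE memNset// subr0 scale0r add0r scale1r. Qed.

Lemma open_meas_comp (w : T -> E) (h : E -> R) :
  (forall V, open V -> measurable (w @^-1` V)) ->
  (forall a, open [set x | a < h x]) ->
  measurable_fun setT (fun t => h (w t)).
Proof.
move=> mw oh.
apply: (measurability _ (measurable_realfun.RGenOInfty.measurableE R)) => //.
move=> /= _ [_ [a ->] <-]; rewrite setTI.
rewrite (_ : _ @^-1` _ = w @^-1` [set x | a < h x]); first exact: mw.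
apply/seteqP; split => t /=; rewrite in_itv /= andbT //.
Qed.

Lemma patched_open (s : nat -> T -> E) (u : T -> E) (N : set T) (c : E) :
  measurable N -> (forall n, simple_fun (s n)) ->
  (forall t, ~ N t -> s n t @[n --> \oo] --> u t) ->
  forall V, open V -> measurable
    ((fun t => (\1_(~` N) t : R) *: u t + (1 - \1_(~` N) t) *: c) @^-1` V).
Proof.
move=> mN ss cv V oV.
rewrite (_ : _ @^-1` _ = (~` N `&` u @^-1` V) `|` (N `&` [set _ | V c])).
  apply: measurableU; first exact: lim_preimage_open oV.
  apply: measurableI => //.
  have [Vc|Vc] := pselect (V c).
    by rewrite (_ : [set _ | V c] = setT); [exact: measurableT|apply/seteqP; split].
  by rewrite (_ : [set _ | V c] = set0); [exact: measurable0|apply/seteqP; split].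
apply/seteqP; split => t /=.
  have [Nt|Nt] := pselect (N t).
    by rewrite (@step_out (~` N) (u t) c t (fun H => H Nt)); right.
  by rewrite (@step_in (~` N) (u t) c t Nt); left.
move=> [[Nt Vt]|[Nt Vc]]; first by rewrite (@step_in (~` N) (u t) c t Nt).
by rewrite (@step_out (~` N) (u t) c t (fun H => H Nt)).
Qed.
End aux.

Section aux2.
Context {R : realType} {d : measure_display} {T : measurableType d}.
Variable mu : {measure set T -> \bar R}.
Import HBNNSimple.
Local Open Scope ereal_scope.

Lemma nnsup_null_le (N : set T) (K L : T -> \bar R) :
  measurable N -> mu N = 0 -> (forall x, ~ N x -> K x = L x) ->
  (forall x, 0 <= L x) ->
  ereal_sup [set sintegral mu h | h in [set h : {nnsfun T >-> R} | forall x, (h x)%:E <= K x]]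
  <= ereal_sup [set sintegral mu h | h in [set h : {nnsfun T >-> R} | forall x, (h x)%:E <= L x]].
Proof.
move=> mN N0 KL L0.
apply: ge_ereal_sup => _ [h hK <-].
pose h' := mul_nnsfun h (indic_nnsfun R (measurableC mN)).
have h'E x : h' x = (h x * \1_(~` N) x)%R by [].
apply: ereal_sup_ubound; exists h'.
  move=> x /=; change (((h x * \1_(~` N) x)%R)%:E <= L x); rewrite indicE.
  have [Nx|Nx] := pselect (N x).
    by rewrite memNset ?mulr0//; move=> /(_ Nx).
  by rewrite mem_set ?mulr1 -?KL//.
have e1 (g : {nnsfun T >-> R}) : sintegral mu g = \int[mu]_x (g x)%:E.
  by rewrite integral_nnsfun// patch_setT.
rewrite !e1.
rewrite [LHS](ge0_negligible_integral _ _ _ _ N0)//;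
  try (by move=> *; rewrite lee_fin); try (by apply/measurable_EFinP; exact: measurable_funTS).
rewrite [RHS](ge0_negligible_integral _ _ _ _ N0)//;
  try (by move=> *; rewrite lee_fin); try (by apply/measurable_EFinP; exact: measurable_funTS).
apply: eq_integral => x; rewrite inE => -[_ Nx].
by rewrite h'E indicE mem_set ?mulr1.
Qed.

Lemma nnsup_null (N : set T) (K L : T -> \bar R) :
  measurable N -> mu N = 0 -> (forall x, ~ N x -> K x = L x) ->
  (forall x, 0 <= K x) -> (forall x, 0 <= L x) ->
  ereal_sup [set sintegral mu h | h in [set h : {nnsfun T >-> R} | forall x, (h x)%:E <= K x]]
  = ereal_sup [set sintegral mu h | h in [set h : {nnsfun T >-> R} | forall x, (h x)%:E <= L x]].
Proof.
move=> mN N0 KL K0 L0; apply/eqP; rewrite eq_le; apply/andP; split.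
  exact: (nnsup_null_le mN N0).
by apply: (nnsup_null_le mN N0) => // x /KL.
Qed.

Lemma integral_null (N : set T) (F G : T -> \bar R) :
  measurable N -> mu N = 0 -> (forall t, ~ N t -> F t = G t) ->
  \int[mu]_t F t = \int[mu]_t G t.
Proof.
move=> mN N0 FG; rewrite /integral !patch_setT.
have p0 (H : T -> \bar R) x : 0 <= H^\+ x by exact: funepos_ge0.
have n0 (H : T -> \bar R) x : 0 <= H^\- x by exact: funeneg_ge0.
have q1 x : ~ N x -> F^\+ x = G^\+ x by move=> Nx; rewrite !funeposE FG.
have q2 x : ~ N x -> F^\- x = G^\- x by move=> Nx; rewrite !funenegE FG.
have e1 := @nnsup_null _ (F^\+) (G^\+) mN N0 q1 (p0 F) (p0 G).
have e2 := @nnsup_null _ (F^\-) (G^\-) mN N0 q2 (n0 F) (n0 G).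
exact: (congr2 (fun a b => a - b) e1 e2).
Qed.

Lemma measure_finE (A : set T) : measurable A -> mu setT < +oo ->
  mu A = (fine (mu A))%:E /\ (0 <= fine (mu A))%R /\ (fine (mu A) <= fine (mu setT))%R.
Proof.
move=> mA mT.
have leA : mu A <= mu setT by apply: le_measure; rewrite ?inE.
have fA : mu A \is a fin_num by rewrite ge0_fin_numE ?measure_ge0 // (le_lt_trans leA).
have fT : mu setT \is a fin_num by rewrite ge0_fin_numE ?measure_ge0.
split; first by rewrite fineK.
split; first by rewrite fine_ge0 ?measure_ge0.
by rewrite -lee_fin !fineK.
Qed.

Lemma halving : nonatomic mu -> mu setT < +oo -> 0 < mu setT ->
  forall n : nat, exists S, [/\ measurable S, (0 < fine (mu S))%R &
     (fine (mu S) <= fine (mu setT) / n.+1%:R)%R].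
Proof.
move=> na mT m0.
have [eT [r0 _]] := measure_finE measurableT mT.
have rpos : (0 < fine (mu setT))%R by rewrite -lte_fin -eT.
elim => [|n [S [mS S0 Sle]]].
  by exists setT; split => //; rewrite divr1.
have [eS [_ SleT]] := measure_finE mS mT.
have [B [mB BS B0 BlS]] : exists B, [/\ measurable B, B `<=` S, 0 < mu B & mu B < mu S].
  by apply: na => //; rewrite eS lte_fin.
have [eB _] := measure_finE mB mT.
move: B0 BlS; rewrite eB eS !lte_fin => B0 BlS.
have key : (fine (mu S) / 2 <= fine (mu setT) / n.+2%:R)%R.
  apply: (le_trans (y := (fine (mu setT) / n.+1%:R / 2)%R)); first by rewrite ler_pM2r // invr_gt0.
  rewrite -mulrA -invfM ler_pM2l // lef_pV2 ?posrE ?mulr_gt0 ?ltr0n// -natrM ler_nat.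
  by rewrite ltn_Pmulr.
have [BB|BB] := leP (fine (mu B)) (fine (mu S) / 2)%R.
  by exists B; split => //; exact: le_trans key.
have eD : fine (mu (S `\` B)) = (fine (mu S) - fine (mu B))%R.
  have eD' : mu (S `\` B) = mu S - mu B.
    rewrite measureD ?(setIidr BS) //; apply: (le_lt_trans _ mT); apply: le_measure; rewrite ?inE //.
  by rewrite eD' eS eB -EFinB.
exists (S `\` B); split; first exact: measurableD.
  by rewrite eD subr_gt0.
rewrite eD; apply: le_trans key; lra.
Qed.

Lemma g_surj (E : normedModType R) (g : E -> R) : continuous g ->
  (forall M, exists x, (g x < M)%R) -> (forall M, exists x, (M < g x)%R) ->
  forall y, exists z, g z = y.
Proof.
move=> cg gl gu y.
have [a ga] := gl y; have [b gb] := gu y.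
pose phi := fun t : R => g (a + t *: (b - a))%R.
have cphi : {within `[0%R, 1%R], continuous phi}.
  apply: continuous_subspaceT => t.
  apply: continuous_comp; last exact: cg.
  apply: cvgD; first exact: cvg_cst.
  by apply: cvgZl; exact: cvg_id.
have [|c _ pc] := @IVT R phi 0%R 1%R y ler01 cphi.
  rewrite /phi scale0r scale1r addr0 addrC subrK.
  by rewrite ge_min le_max (ltW ga) (ltW gb) orbT.
by exists (a + c *: (b - a))%R.
Qed.

Lemma integrable_indic' A : measurable A -> mu setT < +oo ->
  mu.-integrable [set: T] (fun x : T => (\1_A x)%:E).
Proof.
move=> mA mT; apply/integrableP; split; first exact/measurable_EFinP.
rewrite (eq_integral (fun x => (\1_A x)%:E)); last first.
  by move=> t _; rewrite gee0_abs// lee_fin.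
rewrite integral_indic// setIT.
by rewrite (@le_lt_trans _ _ (mu setT)) ?le_measure ?inE.
Qed.

Lemma step_integral (E : normedModType R) (F : E -> R) (A : set T) (x z : E) :
  measurable A -> mu setT < +oo ->
  \int[mu]_t (F ((\1_A t : R) *: x + (1 - \1_A t) *: z)%R)%:E
  = (F x)%:E * mu A + (F z)%:E * mu (~` A).
Proof.
move=> mA mT.
rewrite (eq_integral (fun t => (F x)%:E * (\1_A t)%:E + (F z)%:E * (\1_(~`A) t)%:E)); last first.
  move=> t _; have [At|At] := pselect (A t).
    rewrite step_in // !indicE mem_set // memNset; last by move=> /(_ At).
    by rewrite mule1 mule0 adde0.
  rewrite step_out // !indicE memNset // mem_set //.
  by rewrite mule1 mule0 add0e.
have mAc : measurable (~` A) by exact: measurableC.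
rewrite integralD //; try (apply: integrableZl => //; exact: integrable_indic').
by rewrite !integralZl //; try exact: integrable_indic'; rewrite !integral_indic // !setIT.
Qed.

Lemma stepA (E : normedModType R) (f g : E -> R) (D : set (T -> E)) (u : T -> E) (M : R) :
  nonatomic mu -> 0 < mu setT -> mu setT < +oo -> continuous g ->
  (forall x, (f x <= M)%R) -> (forall M, exists x, (g x < M)%R) ->
  (forall M, exists x, (M < g x)%R) ->
  decomposable D -> (forall c : E, D (fun _ => c)) ->
  (forall v, D v -> (Jfun mu f g u <= Jfun mu f g v)%R) ->
  forall x, (Jfun mu f g u <= f x * fine (mu setT))%R.
Proof.
move=> na m0 mT gc fM gl gu decD constD umin x.
apply/ler_addgt0Pr => e e0.
have [eT [r0 _]] := measure_finE measurableT mT.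
set r := fine (mu setT) in eT r0 *.
have rpos : (0 < r)%R by rewrite -lte_fin -eT.
have Mfx : (0 <= M - f x)%R by rewrite subr_ge0.
pose del := (e / (M - f x + 1))%R.
have del0 : (0 < del)%R by rewrite divr_gt0 // ltr_wpDl.
have [n rn] : exists n : nat, (r / n.+1%:R < del)%R.
  exists (Num.Def.archi_bound (r / del)).
  rewrite ltr_pdivrMr ?ltr0n // mulrC -ltr_pdivrMr //.
  apply: (lt_trans (archi_boundP _)); first by rewrite divr_ge0 // ltW.
  by rewrite ltr_nat.
have [S [mS S0 Sle]] := halving na mT m0 n.
have [eS [s0 _]] := measure_finE mS mT.
set s := fine (mu S) in eS s0 S0 Sle *.
have mA : measurable (~` S) by exact: measurableC.
have eA : mu (~` S) = (r - s)%:E.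
  have e' : mu (~` S) = mu setT - mu S.
    by rewrite -setTD measureD // setTI.
  by rewrite e' eT eS -EFinB.
have [z gz] := g_surj gc gl gu (- (g x * (r - s)) / s)%R.
have Dv := decD (fun _ => x) (fun _ => z) (constD x) (constD z) (~` S) mA.
have := umin _ Dv.
rewrite /Jfun !step_integral // setCK eA eS -!EFinM -!EFinD /= gz.
rewrite divfK ?gt_eqF // addrN expr0n /= addr0 => h.
apply: (le_trans h).
have h1 : (f z * s <= M * s)%R by rewrite ler_wpM2r.
have h2 : ((M - f x) * s <= (M - f x) * del)%R.
  by rewrite ler_wpM2l // ltW // (le_lt_trans Sle).
have h3 : ((M - f x) * del <= e)%R.
  rewrite /del mulrA ler_pdivrMr ?ltr_wpDl //.
  nra.
nra.
Qed.
End aux2.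

Unset Implicit Arguments. Set Strict Implicit.

Theorem theorem1p5 (R : realType) (d : measure_display) (T : measurableType d)
  (mu : {measure set T -> \bar R}) (E : completeNormedModType R)
  (f g : E -> R) (p : R) :
  nonatomic mu ->
  (0 < mu setT)%E -> (mu setT < +oo)%E ->
  lower_semicontinuous (fun x => (f x)%:E) ->
  continuous g ->
  (exists M : R, forall x, f x <= M) ->
  (forall M : R, exists x, g x < M) ->
  (forall M : R, exists x, M < g x) ->
  1 <= p ->
  (exists C : R, forall x, `|f x| <= C * (1 + `|x| `^ p) /\
                           `|g x| <= C * (1 + `|x| `^ p)) ->
  (forall x y, (forall z, f x <= f z) -> (forall z, f y <= f z) -> x = y) ->
  (forall x, g x = 0 -> ~ (forall z, f x <= f z)) ->
  forall D : set (T -> E),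
    D `<=` Lp_fun mu p ->
    decomposable D ->
    (forall c : E, D (fun _ => c)) ->
    ~ (exists u, D u /\ forall v, D v -> Jfun mu f g u <= Jfun mu f g v).
Proof.
move=> na m0 mT flsc gc [M fM] gl gu p1 [C Cb] funiq nozero D DLp decD constD
  [u [Du umin]].
have Jle := stepA na m0 mT gc fM gl gu decD constD umin.
have [eT [r0 _]] := measure_finE measurableT mT.
set r := fine (mu setT) in eT r0 Jle *.
have rpos : 0 < r by rewrite -lte_fin -eT.
have [[s [ss [N [mN N0 NP]]]] Lpu] := DLp u Du.
have cv : forall t, ~ N t -> s n t @[n --> \oo] --> u t.
  by move=> t Nt; apply: contrapT => H; apply: Nt; apply: NP; exact: H.
pose w := fun t => (\1_(~` N) t : R) *: u t + (1 - \1_(~` N) t) *: (0 : E).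
have Dw : D w := decD u (fun _ => 0) Du (constD 0) (~` N) (measurableC mN).
have wu : forall t, ~ N t -> w t = u t by move=> t Nt; exact: step_in.
have ow : forall V, open V -> measurable (w @^-1` V).
  by move=> V oV; exact: (patched_open 0 mN ss cv oV).
have mfw : measurable_fun setT (fun t => f (w t)).
  apply: open_meas_comp => // a.
  have -> : [set x | a < f x] = [set x | (a%:E < (f x)%:E)%E].
    by apply/seteqP; split => y /=; rewrite lte_fin.
  exact: (lower_semicontinuousP _).1 flsc a.
have ogt (h : E -> R) : continuous h -> forall a, open [set x | a < h x].
  move=> ch a; have -> : [set x | a < h x] = h @^-1` `]a, +oo[.
    by apply/seteqP; split => y /=; rewrite in_itv /= andbT.
  apply: (proj1 (continuousP h) ch); exact: itv_open_ends_open.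
have mgw : measurable_fun setT (fun t => g (w t)).
  by apply: open_meas_comp => //; exact: ogt.
have mnw : measurable_fun setT (fun t => `|w t| `^ p).
  apply: (measurableT_comp (measurable_powR p) (g := fun t => `|w t|)).
  apply: open_meas_comp => //; apply: ogt; exact: norm_continuous.
have intc (k : R) : mu.-integrable setT (fun _ => k%:E).
  apply/integrableP; split; first exact: measurable_cst.
  rewrite (eq_integral (cst `|k|%:E)); last by move=> t _; rewrite abse_EFin.
  by rewrite integral_cst // eT -EFinM ltry.
have intp : mu.-integrable setT (fun t => (`|w t| `^ p)%:E).
  apply/integrableP; split; first exact/measurable_EFinP.
  rewrite (eq_integral (fun t => (`|w t| `^ p)%:E)); last first.
    by move=> t _; rewrite abse_EFin ger0_norm // powR_ge0.
  rewrite (integral_null mN N0 (G := fun t => (`|u t| `^ p)%:E)) //.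
  by move=> t Nt; rewrite wu.
have intF (h : E -> R) : measurable_fun setT (fun t => h (w t)) ->
    (forall x, `|h x| <= C * (1 + `|x| `^ p)) ->
    mu.-integrable setT (fun t => (h (w t))%:E).
  move=> mh hb.
  apply: (le_integrable measurableT (g := fun t => (C%:E * (1%:E + (`|w t| `^ p)%:E))%E)).
  - exact/measurable_EFinP.
  - move=> t _; rewrite abse_EFin -EFinD -EFinM abse_EFin lee_fin.
    by apply: le_trans (hb _) _; exact: ler_norm.
  - apply: integrableZl => //; apply: integrableD => //.
have intf := intF f mfw (fun x => (Cb x).1).
have intg := intF g mgw (fun x => (Cb x).2).
have fIf := integrable_fin_num measurableT intf.
have fIg := integrable_fin_num measurableT intg.
set If := (\int[mu]_t (f (w t))%:E)%E in fIf.
set Ig := (\int[mu]_t (g (w t))%:E)%E in fIg.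
have Jue : Jfun mu f g u = fine If + fine Ig ^+ 2.
  rewrite /Jfun (integral_null mN N0 (F := fun t => (f (u t))%:E)
    (G := fun t => (f (w t))%:E)); last by move=> t Nt; rewrite wu.
  rewrite (integral_null mN N0 (F := fun t => (g (u t))%:E)
    (G := fun t => (g (w t))%:E)) //; by move=> t Nt; rewrite wu.
set m := Jfun mu f g u / r.
have hm : forall x, m <= f x by move=> x; rewrite ler_pdivrMr.
pose phi := fun t => (f (w t) - m)%:E.
have phi0 : forall t, (0 <= phi t)%E by move=> t; rewrite lee_fin subr_ge0.
have mphi : measurable_fun setT phi.
  apply/measurable_EFinP; apply: measurable_funB => //; exact: measurable_cst.
have iphi : (\int[mu]_t phi t)%E = (fine If - m * r)%:E.
  rewrite (eq_integral (fun t => (f (w t))%:E - m%:E)%E); last by move=> t _; rewrite /phi EFinB.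
  rewrite integralB //; try exact: intf; try exact: intc.
  by rewrite integral_cst // eT -EFinM EFinB (fineK fIf).
have mr : m * r = Jfun mu f g u by rewrite /m divfK ?gt_eqF.
rewrite mr Jue in iphi.
have ge := integral_ge0 mu (D := setT) (fun t _ => phi0 t).
rewrite iphi lee_fin in ge.
have IG0 : fine Ig = 0.
  apply/eqP; rewrite -sqrf_eq0 eq_le sqr_ge0 andbT; lra.
have iphi0 : (\int[mu]_t `|phi t|)%E = 0.
  rewrite (eq_integral phi); last by move=> t _; rewrite gee0_abs.
  by rewrite iphi IG0 expr0n /= addr0 subrr.
have [N2 [mN2 N20 N2P]] := (ae_eq_integral_abs mu measurableT mphi).1 iphi0.
have [t0 Nt0] : exists t0, ~ N2 t0.
  apply: contrapT => H.
  have : (mu setT <= mu N2)%E.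
    apply: le_measure; rewrite ?inE //.
    by move=> t _; apply: contrapT => Ht; apply: H; exists t.
  by rewrite N20 leNgt m0.
have hN2 t : ~ N2 t -> f (w t) = m.
  move=> Nt; apply/eqP; rewrite -subr_eq0 -(@eqe _ _ 0); apply/eqP.
  by apply: contrapT => H; apply: Nt; apply: N2P => /(_ I).
have glob t : ~ N2 t -> forall z, f (w t) <= f z by move=> Nt z; rewrite hN2.
set x0 := w t0.
have wx0 t : ~ N2 t -> w t = x0 by move=> Nt; exact: funiq (glob t Nt) (glob t0 Nt0).
have IgE : Ig = (g x0 * r)%:E.
  rewrite /Ig (integral_null mN2 N20 (G := fun _ => (g x0)%:E)); last first.
    by move=> t Nt; rewrite wx0.
  by rewrite integral_cst // eT -EFinM.
rewrite IgE /= in IG0.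
have gx0 : g x0 = 0 by move/eqP: IG0; rewrite mulf_eq0 (gt_eqF rpos) orbF => /eqP.
exact: nozero x0 gx0 (glob t0 Nt0).
Qed.
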